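(* Let $t\ge 3$ be an integer, let $G$ be a graph not containing $K_{3,t}$ as a subgraph, let $D$ be a minimum dominating set of $G$, and let $\nabla$ be an integer with $\nabla>\nabla_1^B(G)$. Define $D_1=\{v\in V(G):$ for all $A\subseteq V(G)\setminus\{v\}$ with $N(v)\subseteq N[A]$ we have $|A|>2\nabla-1\}$, $\hat D=\{v\in V(G):$ for all $A\subseteq D\setminus\{v\}$ with $N(v)\subseteq N[A]$ we have $|A|>2\nabla-1\}$, $R_1=V(G)\setminus N[D_1]$ and $N_{R_1}(v)=N(v)\cap R_1$; for $v\in V(G)$ let $B_v=\{z\in V(G)\setminus\{v\}: |N_{R_1}(v)\cap N_{R_1}(z)|\ge(2\nabla-1)t+1\}$, and let $W=\{v\in V(G): B_v\neq\emptyset\}$. Then for every $v\in W$ and every set $A_v\subseteq V(G)\setminus\{v\}$ with $|A_v|\le 2\nabla-1$ and $N_{R_1}(v)\subseteq N[A_v]$ (such a set exists as $v\notin D_1$), we have $B_v\subseteq A_v$ (hence $|B_v|\le 2\nabla-1$); moreover, if $v\notin\hat D$, then $B_v\subseteq D$.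
   Context: Graphs are finite, undirected and simple. $N(v)$ is the open neighbourhood of $v$, $N[v]=N(v)\cup\{v\}$, $N[A]=\bigcup_{a\in A}N[a]$. A dominating set is a set $D$ with $N[D]=V(G)$. A $1$-shallow minor of $G$ is a graph obtained from $G$ by deleting vertices and edges and contracting pairwise vertex-disjoint connected subgraphs of radius at most $1$; $\nabla_1^B(G)$ is the maximum edge density $|E(H)|/|V(H)|$ of a bipartite $1$-shallow minor $H$ of $G$. $K_{3,t}$ is the complete bipartite graph with parts of sizes $3$ and $t$. *)

(* Defs.v *)
(* A finite simple graph is a symmetric irreflexive relation
   e : rel T on a finType T. *)
From mathcomp Require Import all_boot.
Set Implicit Arguments. Unset Strict Implicit. Unset Printing Implicit Defensive.

Section Graphs.
Variables (T : finType) (e : rel T).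

Definition nbh (v : T) : {set T} := [set u | e v u].
Definition cnbh (v : T) : {set T} := v |: nbh v.
Definition cnbhs (A : {set T}) : {set T} := \bigcup_(a in A) cnbh a.

Definition dominating (D : {set T}) : Prop := cnbhs D = [set: T].
Definition min_dominating (D : {set T}) : Prop :=
  dominating D /\ forall D' : {set T}, dominating D' -> #|D| <= #|D'|.

Definition has_K3t (t : nat) : Prop :=
  exists X Y : {set T}, [/\ #|X| = 3, #|Y| = t, [disjoint X & Y] &
    forall x y, x \in X -> y \in Y -> e x y].

(* a branch set of radius at most 1: nonempty with a centre adjacent to all
   other vertices of the set (so it induces a connected subgraph of radius <= 1) *)
Definition radius1_set (X : {set T}) : Prop :=
  exists c, c \in X /\ forall x, x \in X -> x != c -> e c x.

(* A bipartite 1-shallow minor H of G, presented with a bipartition: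
   L and R are the branch sets of the two sides (vertices of H), pairwise
   disjoint, each of radius <= 1; E is the edge set of H, each edge written as
   (left end, right end), and an edge may only join two branch sets between
   which G has an edge. *)
Definition bip_shallow_minor (L R : {set {set T}})
    (E : {set {set T} * {set T}}) : Prop :=
  [/\ forall X, X \in L :|: R -> radius1_set X,
      forall X Y, X \in L :|: R -> Y \in L :|: R -> X != Y -> [disjoint X & Y],
      [disjoint L & R] &
      forall p, p \in E -> [/\ p.1 \in L, p.2 \in R &
                           exists x y, [/\ x \in p.1, y \in p.2 & e x y]]].

(* nabla > nabla_1^B(G): every bipartite 1-shallow minor H has
   |E(H)| / |V(H)| < nabla (H with at least one vertex). *)
Definition nabla_gt_bip1 (nabla : nat) : Prop :=
  forall L R E, bip_shallow_minor L R E -> 0 < #|L :|: R| ->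
    #|E| < nabla * #|L :|: R|.

Definition D1set (nabla : nat) : {set T} :=
  [set v | [forall A : {set T},
     ((A \subset [set~ v]) && (nbh v \subset cnbhs A)) ==> (nabla.*2 - 1 < #|A|)]].

Definition Dhat (D : {set T}) (nabla : nat) : {set T} :=
  [set v | [forall A : {set T},
     ((A \subset D :\ v) && (nbh v \subset cnbhs A)) ==> (nabla.*2 - 1 < #|A|)]].

Definition R1set (nabla : nat) : {set T} := ~: cnbhs (D1set nabla).

Definition nbhR1 (nabla : nat) (v : T) : {set T} := nbh v :&: R1set nabla.

Definition Bset (nabla t : nat) (v : T) : {set T} :=
  [set z | (z != v) &&
     ((nabla.*2 - 1) * t + 1 <= #|nbhR1 nabla v :&: nbhR1 nabla z|)].

Definition Wset (nabla t : nat) : {set T} := [set v | Bset nabla t v != set0].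

End Graphs.

(* Main.v *)
Require Import Defs.
From mathcomp Require Import all_boot.

Lemma sub_card_ex (T : finType) (A : {set T}) k :
  k <= #|A| -> exists B : {set T}, B \subset A /\ #|B| = k.
Proof.
move=> hk; exists [set x in take k (enum A)]; split.
  by apply/subsetP=> x; rewrite inE => /mem_take; rewrite mem_enum.
rewrite cardsE (card_uniqP _); last by apply: take_uniq; apply: enum_uniq.
by rewrite size_takel // -cardE.
Qed.

Lemma pigeon (T : finType) (e : rel T) (A S : {set T}) t :
  S \subset cnbhs e A -> (forall a, a \in A -> #|S :&: cnbh e a| <= t) ->
  #|S| <= #|A| * t.
Proof.
move=> hS ht.
have h1 : #|S| <= \sum_(x in S) \sum_(a in A) (x \in cnbh e a).
  rewrite -sum1_card; apply: leq_sum => x xS.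
  move/subsetP: hS => /(_ x xS) /bigcupP [a aA xa].
  by rewrite (bigD1 a) //= xa.
apply: (leq_trans h1); rewrite exchange_big /=.
rewrite -sum_nat_const; apply: leq_sum => a aA.
apply: leq_trans (ht a aA).
rewrite (eq_bigr (fun x => if x \in cnbh e a then 1 else 0)); last by move=> x _; case: (x \in cnbh e a).
rewrite -big_mkcondr /= sum1_card.
by rewrite -cardsE; apply: subset_leq_card; apply/subsetP => x; rewrite !inE.
Qed.

Lemma key (T : finType) (e : rel T) (t nabla : nat) (v z : T) (Av : {set T}) :
  irreflexive e -> ~ has_K3t e t ->
  Av \subset [set~ v] -> #|Av| <= nabla.*2 - 1 ->
  nbhR1 e nabla v \subset cnbhs e Av -> z \in Bset e nabla t v -> z \in Av.
Proof.
move=> irr nK sAv cAv cov; rewrite inE => /andP [zv hz].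
apply/negPn/negP => zA.
set S := nbhR1 e nabla v :&: nbhR1 e nabla z.
have [a aA ha] : exists2 a, a \in Av & t < #|S :&: cnbh e a|.
  apply/exists_inP; case: (boolP [exists a in Av, t < #|S :&: cnbh e a|]) => // /exists_inP H.
  exfalso.
  have := @pigeon T e Av S t.
  have hS : S \subset cnbhs e Av.
    by apply: subset_trans cov; apply: subsetIl.
  move=> /(_ hS) H2.
  have : #|S| <= #|Av| * t.
    apply: H2 => a aA; rewrite leqNgt; apply/negP => hh; apply: H; exists a => //.
  move=> H3.
  have := leq_trans hz (leq_trans H3 (leq_mul cAv (leqnn t))).
  by rewrite addn1 ltnn.
set Y0 := S :&: nbh e a.
have hY0 : t <= #|Y0|.
  have : S :&: cnbh e a \subset a |: Y0.
    apply/subsetP => x; rewrite /Y0 /cnbh !inE.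
    by case/andP => -> /orP [->|->]; rewrite ?orbT.
  move/subset_leq_card; rewrite cardsU1 => H.
  have := leq_trans ha H; case: (a \in Y0) => /= H'.
    by rewrite add0n in H'; apply: ltnW.
  by rewrite add1n ltnS in H'.
have [Y [sY cY]] := @sub_card_ex T Y0 t hY0.
have av : a != v by move/subsetP: sAv => /(_ a aA); rewrite !inE.
have az : a != z by apply: contraNneq zA => <-.
have inY : forall y, y \in Y -> [/\ e v y, e z y & e a y].
  move=> y /(subsetP sY); rewrite /Y0 /S /nbhR1 /nbh !inE.
  by case/andP => /andP [/andP [-> _] /andP [-> _]] ->.
apply: nK; exists [set a; v; z], Y; split => //.
- rewrite setUC cardsU1 cards2 av !inE negb_or (eq_sym z a) az zv /=.
  done.
- rewrite disjoint_sym; apply/pred0P => y /=; apply/negP => /andP [yY].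
  have [h1 h2 h3] := inY y yY.
  rewrite !inE; case/orP => [/orP [] | ] /eqP ey; subst y.
  + by rewrite irr in h3.
  + by rewrite irr in h1.
  + by rewrite irr in h2.
- move=> x y; rewrite !inE => hx /inY [h1 h2 h3].
  by case/orP: hx => [/orP [] | ] /eqP ->.
Qed.

Theorem lemma30 (T : finType) (e : rel T) (t nabla : nat) (D : {set T}) :
  symmetric e -> irreflexive e ->
  3 <= t ->
  ~ has_K3t e t ->
  min_dominating e D ->
  nabla_gt_bip1 e nabla ->
  forall v, v \in Wset e nabla t ->
    [/\ forall Av : {set T}, Av \subset [set~ v] -> #|Av| <= nabla.*2 - 1 ->
          nbhR1 e nabla v \subset cnbhs e Av -> Bset e nabla t v \subset Av,
        #|Bset e nabla t v| <= nabla.*2 - 1 &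
        v \notin Dhat e D nabla -> Bset e nabla t v \subset D].
Proof.
move=> sym irr t3 nK _ _ v vW.
have P1 : forall Av : {set T}, Av \subset [set~ v] -> #|Av| <= nabla.*2 - 1 ->
          nbhR1 e nabla v \subset cnbhs e Av -> Bset e nabla t v \subset Av.
  by move=> Av h1 h2 h3; apply/subsetP => z; apply: key h1 h2 h3.
split => //.
- have vD1 : v \notin D1set e nabla.
    move: vW; rewrite inE => /set0Pn [z]; rewrite inE => /andP [_ hz].
    have : 0 < #|nbhR1 e nabla v :&: nbhR1 e nabla z| by apply: leq_trans hz; rewrite addn1.
    case/card_gt0P => u; rewrite /nbhR1 /R1set /nbh !inE.
    case/andP => /andP [evu uR] _; apply/negP => vD.
    move/negP: uR; apply; apply/bigcupP; exists v => //.
    by rewrite inE.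
    by rewrite /cnbh /nbh !inE evu orbT.
  move: vD1; rewrite inE negb_forall => /existsP [A].
  rewrite negb_imply -leqNgt => /andP [/andP [h1 h2] h3].
  apply: leq_trans (subset_leq_card (P1 A h1 h3 _)) h3.
  by apply: subset_trans h2; apply: subsetIl.
- rewrite inE negb_forall => /existsP [A].
  rewrite negb_imply -leqNgt => /andP [/andP [h1 h2] h3].
  have hA : A \subset [set~ v].
    by apply: subset_trans h1 _; apply/subsetP => x; rewrite !inE => /andP [].
  apply: subset_trans (P1 A hA h3 _) _.
    by apply: subset_trans h2; apply: subsetIl.
  by apply: subset_trans h1 _; apply: subsetDl.
Qed.
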